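(* Let $m\in(0,1]$ and let $f(x)=\sum_{k=0}^{\infty}x^ka_k$, $a_k\in\mathbb{O}$, be a slice regular function on $\mathbb{B}$ with $|f(x)|\le1$ for all $x\in\mathbb{B}$. Then $$\mathcal{C}_f(x):=|a_0|^m+\sum_{k=1}^{\infty}|x^ka_k|+\left(\frac{1}{1+|a_0|}+\frac{|x|}{1-|x|}\right)\sum_{k=1}^{\infty}|x^ka_k|^2\le1\quad\text{for all }x\in\mathbb{B}\text{ with }|x|\le R_m:=\frac{m}{2+m}.$$ The constant $R_m$ is best possible for each $m$: for every $r\in(R_m,1)$ there exist such an $f$ and $x\in\mathbb{B}$ with $|x|=r$ and $\mathcal{C}_f(x)>1$.
   Context: $\mathbb{O}$ denotes the real algebra of octonions (the 8-dimensional non-commutative, non-associative but alternative normed division algebra over $\mathbb{R}$), with modulus $|x|=\sqrt{x\overline{x}}$ equal to the Euclidean norm on $\mathbb{R}^8$; the modulus is multiplicative, $|xy|=|x||y|$. $\mathbb{B}=\{x\in\mathbb{O}:|x|<1\}$ is the open unit ball. A slice regular function on $\mathbb{B}$ is (equivalently) a function of the form $f(x)=\sum_{k=0}^{\infty}x^ka_k$ with coefficients $a_k\in\mathbb{O}$ placed on the right, the series converging for every $x\in\mathbb{B}$ (the powers $x^k$ are unambiguous since $\mathbb{O}$ is alternative). *)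

(* Defs.v *)
From Stdlib Require Import Reals.
From Coquelicot Require Import Coquelicot.
Open Scope R_scope.

(* Octonions built by the Cayley--Dickson construction:
   C = R x R, H = C x C, O = H x H, with
   (a,b)(c,d) = (a c - conj(d) b, d a + b conj(c)),  conj(a,b) = (conj a, -b). *)

Definition Cx := (R * R)%type.
Definition Cadd (x y : Cx) : Cx := (fst x + fst y, snd x + snd y).
Definition Copp (x : Cx) : Cx := (- fst x, - snd x).
Definition Cconj (x : Cx) : Cx := (fst x, - snd x).
Definition Cmul (x y : Cx) : Cx :=
  (fst x * fst y - snd y * snd x, snd y * fst x + snd x * fst y).
Definition Cnormsq (x : Cx) : R := fst x ^ 2 + snd x ^ 2.

Definition Hq := (Cx * Cx)%type.
Definition Hadd (x y : Hq) : Hq := (Cadd (fst x) (fst y), Cadd (snd x) (snd y)).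
Definition Hopp (x : Hq) : Hq := (Copp (fst x), Copp (snd x)).
Definition Hconj (x : Hq) : Hq := (Cconj (fst x), Copp (snd x)).
Definition Hmul (x y : Hq) : Hq :=
  (Cadd (Cmul (fst x) (fst y)) (Copp (Cmul (Cconj (snd y)) (snd x))),
   Cadd (Cmul (snd y) (fst x)) (Cmul (snd x) (Cconj (fst y)))).
Definition Hnormsq (x : Hq) : R := Cnormsq (fst x) + Cnormsq (snd x).

Definition Oct := (Hq * Hq)%type.
Definition Oadd (x y : Oct) : Oct := (Hadd (fst x) (fst y), Hadd (snd x) (snd y)).
Definition Oopp (x : Oct) : Oct := (Hopp (fst x), Hopp (snd x)).
Definition Osub (x y : Oct) : Oct := Oadd x (Oopp y).
Definition Omul (x y : Oct) : Oct :=
  (Hadd (Hmul (fst x) (fst y)) (Hopp (Hmul (Hconj (snd y)) (snd x))),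
   Hadd (Hmul (snd y) (fst x)) (Hmul (snd x) (Hconj (fst y)))).
Definition Ozero : Oct := (((0,0),(0,0)),((0,0),(0,0))).
Definition Oone : Oct := (((1,0),(0,0)),((0,0),(0,0))).

Definition Onorm (x : Oct) : R := sqrt (Hnormsq (fst x) + Hnormsq (snd x)).

(* powers x^k (unambiguous since O is alternative) *)
Fixpoint Opow (x : Oct) (k : nat) : Oct :=
  match k with O => Oone | S k' => Omul (Opow x k') x end.

Fixpoint Opsum (u : nat -> Oct) (n : nat) : Oct :=
  match n with O => u O | S n' => Oadd (Opsum u n') (u (S n')) end.

Definition Oseries_to (u : nat -> Oct) (s : Oct) : Prop :=
  is_lim_seq (fun n => Onorm (Osub (Opsum u n) s)) 0.

Definition slice_regular_ball (f : Oct -> Oct) (a : nat -> Oct) : Prop :=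
  forall x : Oct, Onorm x < 1 -> Oseries_to (fun k => Omul (Opow x k) (a k)) (f x).

Definition rpow (t m : R) : R :=
  if Req_EM_T t 0 then 0 else Rpower t m.

Definition nnseries (u : nat -> R) : Rbar := Lim_seq (fun n => sum_n u n).

Definition Cf (m : R) (a : nat -> Oct) (x : Oct) : Rbar :=
  Rbar_plus (Finite (rpow (Onorm (a O)) m))
    (Rbar_plus (nnseries (fun k => Onorm (Omul (Opow x (S k)) (a (S k)))))
       (Rbar_mult (Finite (1 / (1 + Onorm (a O)) + Onorm x / (1 - Onorm x)))
          (nnseries (fun k => (Onorm (Omul (Opow x (S k)) (a (S k)))) ^ 2)))).

(* Main.v *)
Require Import Defs.
From Stdlib Require Import Reals.
From Coquelicot Require Import Coquelicot.
From Stdlib Require Import Lra Lia Psatz.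
Open Scope R_scope.

Ltac odes x := destruct x as [[[? ?] [? ?]] [[? ?] [? ?]]].
Ltac ocbv := cbv -[Rplus Rmult Ropp Rminus Rinv IZR pow sqrt Rdiv] in *.
Ltac osplit := repeat match goal with |- (_,_) = (_,_) => f_equal end.

Definition Oscal (s : R) (x : Oct) : Oct :=
  let '(((a0,a1),(a2,a3)),((a4,a5),(a6,a7))) := x in
  (((s*a0,s*a1),(s*a2,s*a3)),((s*a4,s*a5),(s*a6,s*a7))).
Definition Odot (x y : Oct) : R :=
  let '(((a0,a1),(a2,a3)),((a4,a5),(a6,a7))) := x in
  let '(((b0,b1),(b2,b3)),((b4,b5),(b6,b7))) := y in
  a0*b0+a1*b1+a2*b2+a3*b3+a4*b4+a5*b5+a6*b6+a7*b7.
Definition Onsq (x : Oct) : R := Hnormsq (fst x) + Hnormsq (snd x).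
Definition Ore (x : Oct) : R := fst (fst (fst x)).
Definition Oconj (x : Oct) : Oct :=
  let '(((a0,a1),(a2,a3)),((a4,a5),(a6,a7))) := x in
  (((a0,-a1),(-a2,-a3)),((-a4,-a5),(-a6,-a7))).
Definition phi (I : Oct) (a b : R) : Oct := Oadd (Oscal a Oone) (Oscal b I).

Lemma Onorm_sq x : Onorm x = sqrt (Onsq x). Proof. reflexivity. Qed.

Lemma Onsq_mul x y : Onsq (Omul x y) = Onsq x * Onsq y.
Proof. odes x; odes y; unfold Onsq; ocbv; ring. Qed.
Lemma Onsq_dot x : Onsq x = Odot x x.
Proof. odes x; unfold Onsq; ocbv; ring. Qed.
Lemma Onsq_ge0 x : 0 <= Onsq x.
Proof. odes x; unfold Onsq; ocbv. nra. Qed.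
Lemma Odot_sym x y : Odot x y = Odot y x.
Proof. odes x; odes y; ocbv; ring. Qed.
Lemma Odot_addl x y z : Odot (Oadd x y) z = Odot x z + Odot y z.
Proof. odes x; odes y; odes z; ocbv; ring. Qed.
Lemma Odot_addr x y z : Odot z (Oadd x y) = Odot z x + Odot z y.
Proof. odes x; odes y; odes z; ocbv; ring. Qed.
Lemma Odot_scall s x y : Odot (Oscal s x) y = s * Odot x y.
Proof. odes x; odes y; ocbv; ring. Qed.
Lemma Odot_scalr s x y : Odot x (Oscal s y) = s * Odot x y.
Proof. odes x; odes y; ocbv; ring. Qed.
Lemma Odot_zerol x : Odot Ozero x = 0.
Proof. odes x; ocbv; ring. Qed.
Lemma Odot_oppl x y : Odot (Oopp x) y = - Odot x y.
Proof. odes x; odes y; ocbv; ring. Qed.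
Lemma Onsq_add x y : Onsq (Oadd x y) = Onsq x + 2 * Odot x y + Onsq y.
Proof. odes x; odes y; unfold Onsq; ocbv; ring. Qed.
Lemma Onsq_sub x y : Onsq (Osub x y) = Onsq x - 2 * Odot x y + Onsq y.
Proof. odes x; odes y; unfold Onsq; ocbv; ring. Qed.
Lemma Onsq_scal s x : Onsq (Oscal s x) = s^2 * Onsq x.
Proof. odes x; unfold Onsq; ocbv; ring. Qed.
Lemma Onsq_opp x : Onsq (Oopp x) = Onsq x.
Proof. odes x; unfold Onsq; ocbv; ring. Qed.
Lemma Onsq_conj x : Onsq (Oconj x) = Onsq x.
Proof. odes x; unfold Onsq; ocbv; ring. Qed.
Lemma Onsq_zero : Onsq Ozero = 0.
Proof. unfold Onsq; ocbv; ring. Qed.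
Lemma Onsq_one : Onsq Oone = 1.
Proof. unfold Onsq; ocbv; ring. Qed.

Lemma Omul_addl x y z : Omul (Oadd x y) z = Oadd (Omul x z) (Omul y z).
Proof. odes x; odes y; odes z; ocbv; osplit; ring. Qed.
Lemma Omul_addr x y z : Omul z (Oadd x y) = Oadd (Omul z x) (Omul z y).
Proof. odes x; odes y; odes z; ocbv; osplit; ring. Qed.
Lemma Omul_scall s x y : Omul (Oscal s x) y = Oscal s (Omul x y).
Proof. odes x; odes y; ocbv; osplit; ring. Qed.
Lemma Omul_scalr s x y : Omul x (Oscal s y) = Oscal s (Omul x y).
Proof. odes x; odes y; ocbv; osplit; ring. Qed.
Lemma Omul_onel x : Omul Oone x = x.
Proof. odes x; ocbv; osplit; ring. Qed.
Lemma Omul_oner x : Omul x Oone = x.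
Proof. odes x; ocbv; osplit; ring. Qed.
Lemma Omul_zerol x : Omul Ozero x = Ozero.
Proof. odes x; ocbv; osplit; ring. Qed.
Lemma Omul_zeror x : Omul x Ozero = Ozero.
Proof. odes x; ocbv; osplit; ring. Qed.
Lemma Oadd_zerol x : Oadd Ozero x = x.
Proof. odes x; ocbv; osplit; ring. Qed.
Lemma Oadd_zeror x : Oadd x Ozero = x.
Proof. odes x; ocbv; osplit; ring. Qed.
Lemma Oadd_comm x y : Oadd x y = Oadd y x.
Proof. odes x; odes y; ocbv; osplit; ring. Qed.
Lemma Oadd_assoc x y z : Oadd (Oadd x y) z = Oadd x (Oadd y z).
Proof. odes x; odes y; odes z; ocbv; osplit; ring. Qed.
Lemma Oscal_add s x y : Oscal s (Oadd x y) = Oadd (Oscal s x) (Oscal s y).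
Proof. odes x; odes y; ocbv; osplit; ring. Qed.
Lemma Oscal_scal s t x : Oscal s (Oscal t x) = Oscal (s*t) x.
Proof. odes x; ocbv; osplit; ring. Qed.
Lemma Oscal_one x : Oscal 1 x = x.
Proof. odes x; ocbv; osplit; ring. Qed.
Lemma Oscal_zero x : Oscal 0 x = Ozero.
Proof. odes x; ocbv; osplit; ring. Qed.
Lemma Oscal_ozero s : Oscal s Ozero = Ozero.
Proof. ocbv; osplit; ring. Qed.
Lemma Osub_add x y : Osub (Oadd x y) x = y.
Proof. odes x; odes y; ocbv; osplit; ring. Qed.
Lemma Oadd_sub x y : Oadd x (Osub y x) = y.
Proof. odes x; odes y; ocbv; osplit; ring. Qed.

Lemma Oconj_trick x y : Omul (Omul x (Oconj y)) y = Oscal (Onsq y) x.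
Proof. odes x; odes y; unfold Onsq; ocbv; osplit; ring. Qed.

Lemma phi_mul_gen I a b c d : Ore I = 0 ->
  Omul (phi I a b) (phi I c d) = phi I (a*c - b*d*Onsq I) (a*d + b*c).
Proof. odes I; unfold Ore; simpl; intro H; subst; unfold Onsq; ocbv; osplit; ring. Qed.
Lemma phi_assoc_gen I a b c d v : Ore I = 0 ->
  Omul (phi I a b) (Omul (phi I c d) v) = Omul (phi I (a*c - b*d*Onsq I) (a*d + b*c)) v.
Proof. odes I; odes v; unfold Ore; simpl; intro H; subst; unfold Onsq; ocbv; osplit; ring. Qed.
Lemma phi_dot_gen I a b a' b' c d : Ore I = 0 ->
  Odot (Omul (phi I a b) c) (Omul (phi I a' b') d) =
  (a*a' + b*b'*Onsq I) * Odot c d + (a*b' - b*a') * Odot c (Omul I d).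
Proof. odes I; odes c; odes d; unfold Ore; simpl; intro H; subst; unfold Onsq; ocbv; ring. Qed.
Lemma phi_nsq_gen I a b : Ore I = 0 -> Onsq (phi I a b) = a^2 + b^2 * Onsq I.
Proof. odes I; unfold Ore; simpl; intro H; subst; unfold Onsq; ocbv; ring. Qed.
Lemma phi_comm I a b c d : Omul (phi I a b) (phi I c d) = Omul (phi I c d) (phi I a b).
Proof. odes I; ocbv; osplit; ring. Qed.

Lemma Onorm_ge0 x : 0 <= Onorm x.
Proof. rewrite Onorm_sq. apply sqrt_pos. Qed.
Lemma Onorm_sqr x : Onorm x ^ 2 = Onsq x.
Proof. rewrite Onorm_sq. simpl. rewrite Rmult_1_r. apply sqrt_sqrt, Onsq_ge0. Qed.
Lemma Onorm_mul x y : Onorm (Omul x y) = Onorm x * Onorm y.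
Proof. rewrite !Onorm_sq, Onsq_mul. apply sqrt_mult; apply Onsq_ge0. Qed.
Lemma Onorm_scal s x : Onorm (Oscal s x) = Rabs s * Onorm x.
Proof. rewrite !Onorm_sq, Onsq_scal, sqrt_mult. rewrite <- sqrt_Rsqr_abs. unfold Rsqr. f_equal. f_equal. ring.
 apply pow2_ge_0. apply Onsq_ge0. Qed.
Lemma Onorm_one : Onorm Oone = 1.
Proof. rewrite Onorm_sq, Onsq_one. apply sqrt_1. Qed.
Lemma Onorm_zero : Onorm Ozero = 0.
Proof. rewrite Onorm_sq, Onsq_zero. apply sqrt_0. Qed.
Lemma Onorm_opp x : Onorm (Oopp x) = Onorm x.
Proof. rewrite !Onorm_sq, Onsq_opp. auto. Qed.
Lemma Onorm_conj x : Onorm (Oconj x) = Onorm x.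
Proof. rewrite !Onorm_sq, Onsq_conj. auto. Qed.

Lemma Onsq_zero_inv y : Onsq y = 0 -> y = Ozero.
Proof. odes y. unfold Onsq; ocbv. intro H. unfold Ozero. osplit; nra. Qed.

Lemma CS_sq x y : (Odot x y)^2 <= Onsq x * Onsq y.
Proof.
  destruct (Req_dec (Onsq y) 0) as [H|H].
  - apply Onsq_zero_inv in H. subst. rewrite Odot_sym, Odot_zerol, Onsq_zero. nra.
  - assert (Hp : 0 < Onsq y) by (pose proof (Onsq_ge0 y); lra).
    pose proof (Onsq_ge0 (Osub (Oscal (Onsq y) x) (Oscal (Odot x y) y))) as G.
    rewrite Onsq_sub, !Onsq_scal, Odot_scall, Odot_scalr in G.
    rewrite ?Odot_scall, ?Odot_scalr, <- ?Onsq_dot in G.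
    assert (0 <= Onsq y * (Onsq y * Onsq x - Odot x y ^2)) by nra.
    assert (0 <= Onsq y * Onsq x - Odot x y ^2).
    { apply Rmult_le_reg_l with (Onsq y); lra. }
    lra.
Qed.

Lemma CS x y : Odot x y <= Onorm x * Onorm y.
Proof.
  pose proof (CS_sq x y). pose proof (Onorm_ge0 x). pose proof (Onorm_ge0 y).
  rewrite <- !Onorm_sqr in H.
  destruct (Rle_dec (Odot x y) 0). nra.
  apply Rsqr_incr_0_var. unfold Rsqr. nra. nra.
Qed.

Lemma Onorm_tri x y : Onorm (Oadd x y) <= Onorm x + Onorm y.
Proof.
  pose proof (CS x y). pose proof (Onorm_ge0 x). pose proof (Onorm_ge0 y).
  pose proof (Onorm_ge0 (Oadd x y)).
  apply Rsqr_incr_0_var; [|nra]. unfold Rsqr.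
  replace (Onorm (Oadd x y) * Onorm (Oadd x y)) with (Onorm (Oadd x y) ^2) by ring.
  rewrite Onorm_sqr, Onsq_add, <- !Onorm_sqr. nra.
Qed.

Lemma Onorm_sub_tri x y : Onorm x <= Onorm y + Onorm (Osub x y).
Proof.
  replace x with (Oadd y (Osub x y)) at 1 by apply Oadd_sub. apply Onorm_tri.
Qed.

Lemma Osub_sym_norm x y : Onorm (Osub x y) = Onorm (Osub y x).
Proof. rewrite !Onorm_sq. f_equal. odes x; odes y; unfold Onsq; ocbv; ring. Qed.

Lemma Opow_norm x n : Onorm (Opow x n) = Onorm x ^ n.
Proof. induction n; simpl. apply Onorm_one. rewrite Onorm_mul, IHn. ring. Qed.

Fixpoint rsum (f : nat -> R) (n : nat) : R :=
  match n with O => 0 | S k => rsum f k + f k end.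

Lemma rsum_ext f g n : (forall k, (k < n)%nat -> f k = g k) -> rsum f n = rsum g n.
Proof. induction n; simpl; intros; auto. rewrite IHn by (intros; apply H; lia). rewrite H by lia. auto. Qed.
Lemma rsum_plus f g n : rsum (fun k => f k + g k) n = rsum f n + rsum g n.
Proof. induction n; simpl; [ring|rewrite IHn; ring]. Qed.
Lemma rsum_scal c f n : rsum (fun k => c * f k) n = c * rsum f n.
Proof. induction n; simpl; [ring|rewrite IHn; ring]. Qed.
Lemma rsum_zero n : rsum (fun _ => 0) n = 0.
Proof. induction n; simpl; [ring|rewrite IHn; ring]. Qed.
Lemma rsum_swap (F : nat -> nat -> R) n m :
  rsum (fun i => rsum (fun j => F i j) m) n = rsum (fun j => rsum (fun i => F i j) n) m.
Proof.
  induction n; simpl. symmetry; apply rsum_zero.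
  rewrite IHn. rewrite <- rsum_plus. auto.
Qed.
Lemma rsum_le f g n : (forall k, (k < n)%nat -> f k <= g k) -> rsum f n <= rsum g n.
Proof. induction n; simpl; intros; [lra|]. pose proof (IHn (fun k h => H k ltac:(lia))). pose proof (H n ltac:(lia)). lra. Qed.
Lemma rsum_ge0 f n : (forall k, (k < n)%nat -> 0 <= f k) -> 0 <= rsum f n.
Proof. intros. rewrite <- (rsum_zero n). apply rsum_le. auto. Qed.
Lemma rsum_const c n : rsum (fun _ => c) n = INR n * c.
Proof. induction n; cbn [rsum]; [simpl; ring|]. rewrite IHn, S_INR. ring. Qed.
Lemma rsum_delta (f : nat -> R) n k : (k < n)%nat -> (forall i, i <> k -> f i = 0) -> rsum f n = f k.
Proof.
  induction n; intros; [lia|]. simpl. destruct (Nat.eq_dec n k).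
  - subst. rewrite (rsum_ext _ (fun _ => 0)). rewrite rsum_zero; ring. intros; apply H0; lia.
  - rewrite IHn; [|lia|auto]. rewrite (H0 n) by auto. ring.
Qed.

Lemma Odot_Opsum_l v w M : Odot (Opsum v M) w = rsum (fun n => Odot (v n) w) (S M).
Proof. induction M; cbn [Opsum rsum]. ring. rewrite Odot_addl, IHM. cbn [rsum]. ring. Qed.
Lemma Onsq_Opsum v M : Onsq (Opsum v M) = rsum (fun n => rsum (fun m => Odot (v n) (v m)) (S M)) (S M).
Proof.
  rewrite Onsq_dot, Odot_Opsum_l. apply rsum_ext. intros.
  rewrite Odot_sym, Odot_Opsum_l. apply rsum_ext. intros. apply Odot_sym.
Qed.

Lemma sin_2kpi x (k : nat) : sin (x + 2 * INR k * PI) = sin x.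
Proof. apply sin_period. Qed.
Lemma cos_2kpi x (k : nat) : cos (x + 2 * INR k * PI) = cos x.
Proof. apply cos_period. Qed.

Lemma trig_sums (N p : nat) : (0 < p < N)%nat ->
  rsum (fun j => cos (INR j * (2 * PI * INR p / INR N))) N = 0 /\
  rsum (fun j => sin (INR j * (2 * PI * INR p / INR N))) N = 0.
Proof.
  intros Hp. set (b := 2 * PI * INR p / INR N).
  assert (HN : 0 < INR N) by (apply lt_0_INR; lia).
  assert (Hpp : 0 < INR p) by (apply lt_0_INR; lia).
  assert (Hpn : INR p < INR N) by (apply lt_INR; lia).
  assert (Hs : sin (b/2) <> 0).
  { assert (0 < b/2 < PI).
    { unfold b. pose proof PI_RGT_0. split.
      - apply Rmult_lt_0_compat; [|lra]. apply Rdiv_lt_0_compat; nra.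
      - replace (2 * PI * INR p / INR N / 2) with (PI * (INR p / INR N)) by (field; lra).
        assert (INR p / INR N < 1). { apply (Rmult_lt_reg_r (INR N)); auto. field_simplify; lra. }
        nra. }
    pose proof (sin_gt_0 (b/2) (proj1 H) (proj2 H)). lra. }
  assert (HNb : INR N * b = 2 * INR p * PI) by (unfold b; field; lra).
  assert (Tc : forall n, 2 * sin (b/2) * rsum (fun j => cos (INR j * b)) n =
                 sin ((INR n - /2) * b) + sin (b/2)).
  { induction n; cbn [rsum]. simpl INR. replace ((0 - /2) * b) with (- (b/2)) by field. rewrite sin_neg. ring.
    rewrite Rmult_plus_distr_l, IHn. rewrite S_INR.
    replace ((INR n - /2) * b) with (INR n * b - b/2) by field.
    replace ((INR n + 1 - /2) * b) with (INR n * b + b/2) by field.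
    rewrite sin_minus, sin_plus. ring. }
  assert (Ts : forall n, 2 * sin (b/2) * rsum (fun j => sin (INR j * b)) n =
                 cos (b/2) - cos ((INR n - /2) * b)).
  { induction n; cbn [rsum]. simpl INR. replace ((0 - /2) * b) with (- (b/2)) by field. rewrite cos_neg. ring.
    rewrite Rmult_plus_distr_l, IHn. rewrite S_INR.
    replace ((INR n - /2) * b) with (INR n * b - b/2) by field.
    replace ((INR n + 1 - /2) * b) with (INR n * b + b/2) by field.
    rewrite cos_minus, cos_plus. ring. }
  assert (E : (INR N - /2) * b = - (b/2) + 2 * INR p * PI).
  { rewrite <- HNb. field. }
  split.
  - specialize (Tc N). rewrite E, sin_2kpi, sin_neg in Tc.
    assert (2 * sin (b/2) <> 0) by lra.
    apply (Rmult_eq_reg_l (2 * sin (b/2))); auto. rewrite Tc. ring.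
  - specialize (Ts N). rewrite E, cos_2kpi, cos_neg in Ts.
    assert (2 * sin (b/2) <> 0) by lra.
    apply (Rmult_eq_reg_l (2 * sin (b/2))); auto. rewrite Ts. ring.
Qed.

Definition uim (I : Oct) := Ore I = 0 /\ Onsq I = 1.
Definition xpt (I : Oct) (r t : R) : Oct := phi I (r * cos t) (r * sin t).

Lemma phi_mul I a b c d : uim I ->
  Omul (phi I a b) (phi I c d) = phi I (a*c - b*d) (a*d + b*c).
Proof. intros [H1 H2]. rewrite phi_mul_gen, H2 by auto. f_equal; ring. Qed.
Lemma phi_assoc I a b c d v : uim I ->
  Omul (phi I a b) (Omul (phi I c d) v) = Omul (phi I (a*c - b*d) (a*d + b*c)) v.
Proof. intros [H1 H2]. rewrite phi_assoc_gen, H2 by auto. f_equal; f_equal; ring. Qed.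
Lemma phi_nsq I a b : uim I -> Onsq (phi I a b) = a^2 + b^2.
Proof. intros [H1 H2]. rewrite phi_nsq_gen, H2 by auto. ring. Qed.
Lemma phi_one I : phi I 1 0 = Oone.
Proof. odes I. ocbv. osplit; ring. Qed.

Lemma Opow_xpt I r t n : uim I -> Opow (xpt I r t) n = xpt I (r^n) (INR n * t).
Proof.
  intros HI. induction n.
  - simpl. unfold xpt. rewrite Rmult_0_l, cos_0, sin_0, Rmult_1_r, Rmult_0_r. symmetry; apply phi_one.
  - cbn [Opow]. rewrite IHn. unfold xpt. rewrite phi_mul by auto. rewrite S_INR.
    replace ((INR n + 1) * t) with (INR n * t + t) by ring.
    rewrite cos_plus, sin_plus. f_equal; simpl; ring.
Qed.

Lemma xpt_dot I r1 t1 r2 t2 c d : uim I ->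
  Odot (Omul (xpt I r1 t1) c) (Omul (xpt I r2 t2) d) =
  r1 * r2 * (cos (t2 - t1) * Odot c d + sin (t2 - t1) * Odot c (Omul I d)).
Proof.
  intros [H1 H2]. unfold xpt. rewrite phi_dot_gen, H2 by auto. rewrite cos_minus, sin_minus. ring.
Qed.

Lemma xpt_nsq I r t : uim I -> Onsq (xpt I r t) = r^2.
Proof. intros. unfold xpt. rewrite phi_nsq by auto.
  replace ((r * cos t) ^ 2 + (r * sin t) ^ 2) with (r^2 * (sin t ^2 + cos t ^2)) by ring.
  rewrite <- !Rsqr_pow2, sin2_cos2. ring. Qed.

Lemma trig_sums_gen (N n m : nat) : (n < N)%nat -> (m < N)%nat ->
  rsum (fun j => cos (INR j * ((INR m - INR n) * (2*PI/INR N)))) N = (if Nat.eq_dec n m then INR N else 0) /\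
  rsum (fun j => sin (INR j * ((INR m - INR n) * (2*PI/INR N)))) N = 0.
Proof.
  intros Hn Hm. assert (HN : 0 < INR N) by (apply lt_0_INR; lia).
  destruct (Nat.eq_dec n m).
  - subst. split.
    + rewrite (rsum_ext _ (fun _ => 1)). rewrite rsum_const; ring.
      intros j _. replace (INR j * ((INR m - INR m) * (2 * PI / INR N))) with 0 by ring. apply cos_0.
    + rewrite (rsum_ext _ (fun _ => 0)). apply rsum_zero.
      intros j _. replace (INR j * ((INR m - INR m) * (2 * PI / INR N))) with 0 by ring. apply sin_0.
  - destruct (Nat.lt_ge_cases n m).
    + destruct (trig_sums N (m - n) ltac:(lia)) as [A B]. rewrite minus_INR in A, B by lia.
      split.
      * rewrite <- A. apply rsum_ext; intros. f_equal. field. lra.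
      * rewrite <- B. apply rsum_ext; intros. f_equal. field. lra.
    + destruct (trig_sums N (n - m) ltac:(lia)) as [A B]. rewrite minus_INR in A, B by lia.
      split.
      * rewrite <- A. apply rsum_ext; intros. rewrite <- cos_neg. f_equal. field. lra.
      * rewrite (rsum_ext _ (fun j => -1 * sin (INR j * (2 * PI * (INR n - INR m) / INR N)))).
        rewrite rsum_scal, B; ring.
        intros j _.
        replace (INR j * ((INR m - INR n) * (2 * PI / INR N))) with (- (INR j * (2 * PI * (INR n - INR m) / INR N))) by (field; lra).
        rewrite sin_neg. ring.
Qed.

Definition rootpt I r N j := xpt I r (INR j * (2*PI/INR N)).

Lemma ortho I r N M (c : nat -> Oct) : uim I -> (M < N)%nat ->
  rsum (fun j => Onsq (Opsum (fun n => Omul (Opow (rootpt I r N j) n) (c n)) M)) N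
  = INR N * rsum (fun n => r^(2*n) * Onsq (c n)) (S M).
Proof.
  intros HI HM.
  rewrite (rsum_ext _ (fun j => rsum (fun n => rsum (fun m =>
     r^n * r^m * (cos (INR j * ((INR m - INR n) * (2*PI/INR N))) * Odot (c n) (c m)
        + sin (INR j * ((INR m - INR n) * (2*PI/INR N))) * Odot (c n) (Omul I (c m)))) (S M)) (S M))).
  2:{ intros j _. rewrite Onsq_Opsum. apply rsum_ext; intros n _. apply rsum_ext; intros m _.
      unfold rootpt. rewrite !Opow_xpt, xpt_dot by auto. do 4 f_equal; ring. }
  rewrite rsum_swap. rewrite <- rsum_scal. apply rsum_ext; intros n Hn.
  rewrite rsum_swap.
  rewrite (rsum_ext _ (fun m => r^n * r^m * (Odot (c n) (c m) * (if Nat.eq_dec n m then INR N else 0)))).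
  2:{ intros m Hm. destruct (trig_sums_gen N n m ltac:(lia) ltac:(lia)) as [A B].
      rewrite (rsum_ext _ (fun i => r^n*r^m*Odot (c n) (c m) * cos (INR i * ((INR m - INR n) * (2*PI/INR N)))
          + r^n*r^m*Odot (c n) (Omul I (c m)) * sin (INR i * ((INR m - INR n) * (2*PI/INR N))))).
      rewrite rsum_plus, !rsum_scal, A, B. ring.
      intros; ring. }
  rewrite (rsum_delta _ (S M) n) by (auto || (intros i Hi; destruct (Nat.eq_dec n i); [congruence|ring])).
  destruct (Nat.eq_dec n n); [|congruence]. rewrite Onsq_dot. replace (2*n)%nat with (n+n)%nat by lia.
  rewrite pow_add. ring.
Qed.

Lemma Oseries_ev u s : Oseries_to u s -> forall eps, 0 < eps ->
  exists N, forall n, (N <= n)%nat -> Onorm (Osub (Opsum u n) s) < eps.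
Proof.
  intros H eps He. apply is_lim_seq_spec in H. destruct (H (mkposreal eps He)) as [N HN].
  exists N. intros n Hn. specialize (HN n Hn). simpl in HN. rewrite Rminus_0_r in HN.
  rewrite Rabs_right in HN; auto. apply Rle_ge, Onorm_ge0.
Qed.

Lemma Osub_split x y s : Osub x y = Oadd (Osub x s) (Osub s y).
Proof. odes x; odes y; odes s; ocbv; osplit; ring. Qed.
Lemma Onorm_sub3 x y s : Onorm (Osub x y) <= Onorm (Osub x s) + Onorm (Osub y s).
Proof. rewrite (Osub_split x y s), (Osub_sym_norm y s). apply Onorm_tri. Qed.
Lemma Osub_self x : Osub x x = Ozero.
Proof. odes x; ocbv; osplit; ring. Qed.
Lemma Osub_addl x y z : Osub (Oadd x y) z = Oadd (Osub x z) y.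
Proof. odes x; odes y; odes z; ocbv; osplit; ring. Qed.
Lemma Omul_subr x y z : Omul z (Osub x y) = Osub (Omul z x) (Omul z y).
Proof. odes x; odes y; odes z; ocbv; osplit; ring. Qed.

Lemma Opsum_ext u v M : (forall n, (n <= M)%nat -> u n = v n) -> Opsum u M = Opsum v M.
Proof. induction M; simpl; intros. apply H; lia. rewrite IHM by (intros; apply H; lia). rewrite H by lia. auto. Qed.
Lemma Opsum_add u v M : Opsum (fun n => Oadd (u n) (v n)) M = Oadd (Opsum u M) (Opsum v M).
Proof. induction M; simpl. auto. rewrite IHM. odes (Opsum u M); odes (Opsum v M); odes (u (S M)); odes (v (S M)); ocbv; osplit; ring. Qed.
Lemma Opsum_mul_l c u M : Omul c (Opsum u M) = Opsum (fun n => Omul c (u n)) M.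
Proof. induction M; simpl. auto. rewrite Omul_addr, IHM. auto. Qed.
Lemma Opsum_zero_tail u L d : (forall n, (L < n)%nat -> u n = Ozero) -> Opsum u (L + d) = Opsum u L.
Proof. intros H. induction d. rewrite Nat.add_0_r; auto. rewrite Nat.add_succ_r. simpl. rewrite IHd, H by lia. apply Oadd_zeror. Qed.
Lemma Opsum_zero M : Opsum (fun _ => Ozero) M = Ozero.
Proof. induction M; simpl; auto. rewrite IHM. apply Oadd_zeror. Qed.
Lemma Opsum_shift (g : nat -> Oct) k L :
  Opsum (fun n => if (k <=? n)%nat then g (n - k)%nat else Ozero) (L + k) = Opsum g L.
Proof.
  induction L.
  - simpl. destruct k as [|j]. reflexivity.
    cbn [Opsum]. rewrite (Opsum_ext _ (fun _ => Ozero)). rewrite Opsum_zero, Oadd_zerol.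
    rewrite Nat.leb_refl, Nat.sub_diag. auto.
    intros n Hn. destruct (S j <=? n)%nat eqn:E; auto. apply Nat.leb_le in E; lia.
  - replace (S L + k)%nat with (S (L + k)) by lia. cbn [Opsum]. rewrite IHL.
    replace (k <=? S (L + k))%nat with true by (symmetry; apply Nat.leb_le; lia).
    replace (S (L + k) - k)%nat with (S L) by lia. auto.
Qed.

Lemma Opsum_tail_bound (u : nat -> Oct) L q : 0 <= q < 1 ->
  (forall n, (L < n)%nat -> Onorm (u n) <= q ^ n) ->
  forall d, Onorm (Osub (Opsum u (L + d)) (Opsum u L)) <= (q^(S L) - q^(S (L+d))) / (1 - q).
Proof.
  intros Hq Hu d. induction d.
  - rewrite Nat.add_0_r, Osub_self, Onorm_zero. right. field_simplify; lra.
  - rewrite Nat.add_succ_r. cbn [Opsum]. rewrite Osub_addl.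
    eapply Rle_trans. apply Onorm_tri. pose proof (Hu (S (L + d)) ltac:(lia)).
    apply Rle_trans with ((q ^ S L - q ^ S (L + d)) / (1 - q) + q ^ (S (L+d))). lra.
    right. cbn [pow]. field. lra.
Qed.

Lemma phi_add_one I u v : Oadd Oone (phi I u v) = phi I (1 + u) v.
Proof. odes I; ocbv; osplit; ring. Qed.

Lemma W1 I t1 t2 r N k : uim I -> (0 < k < N)%nat ->
  rsum (fun j => Onsq (Oadd Oone (Omul (phi I t1 t2) (Opow (rootpt I r N j) k)))) N
  = INR N * (1 + r^(2*k) * Onsq (phi I t1 t2)).
Proof.
  intros HI Hk. destruct (trig_sums N k Hk) as [A B].
  rewrite (rsum_ext _ (fun j => (1 + r^(2*k) * Onsq (phi I t1 t2)) +
      (2 * t1 * r^k) * cos (INR j * (2 * PI * INR k / INR N)) +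
      (- 2 * t2 * r^k) * sin (INR j * (2 * PI * INR k / INR N)))).
  - rewrite !rsum_plus. rewrite rsum_const. rewrite (rsum_scal (2 * t1 * r ^ k)), (rsum_scal (- 2 * t2 * r ^ k)), A, B, rsum_const. ring.
  - intros j _. unfold rootpt. rewrite Opow_xpt by auto. unfold xpt.
    rewrite phi_mul, phi_add_one, !phi_nsq by auto.
    replace (INR k * (INR j * (2 * PI / INR N))) with (INR j * (2 * PI * INR k / INR N)).
    2:{ assert (0 < INR N) by (apply lt_0_INR; lia). field. lra. }
    set (th := INR j * (2 * PI * INR k / INR N)).
    replace (2*k)%nat with (k+k)%nat by lia. rewrite pow_add.
    pose proof (sin2_cos2 th). unfold Rsqr in H.
    replace (r ^ k * r ^ k * (t1 ^ 2 + t2 ^ 2)) with (r ^ k * r ^ k * (t1 ^ 2 + t2 ^ 2) * (sin th * sin th + cos th * cos th)) by (rewrite H; ring).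
    ring.
Qed.

Lemma slice_shift I r th t1 t2 m k v : uim I ->
  Omul (Opow (xpt I r th) (m + k)) (Omul (phi I t1 t2) v) =
  Omul (Omul (phi I t1 t2) (Opow (xpt I r th) k)) (Omul (Opow (xpt I r th) m) v).
Proof.
  intros HI. rewrite !Opow_xpt by auto. unfold xpt.
  rewrite phi_assoc by auto. rewrite phi_mul by auto. rewrite phi_assoc by auto.
  f_equal. rewrite plus_INR, pow_add. rewrite Rmult_plus_distr_r, cos_plus, sin_plus.
  f_equal; ring.
Qed.

Definition Atr (a : nat -> Oct) L n := if (n <=? L)%nat then a n else Ozero.
Definition cpr (a : nat -> Oct) t k L n :=
  Oadd (Atr a L n) (if (k <=? n)%nat then Omul t (Atr a L (n - k)) else Ozero).

Lemma W2 I r th t1 t2 k L a : uim I ->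
  Omul (Oadd Oone (Omul (phi I t1 t2) (Opow (xpt I r th) k)))
       (Opsum (fun n => Omul (Opow (xpt I r th) n) (a n)) L)
  = Opsum (fun n => Omul (Opow (xpt I r th) n) (cpr a (phi I t1 t2) k L n)) (L + k).
Proof.
  intros HI. set (x := xpt I r th). set (t := phi I t1 t2).
  rewrite Omul_addl, Omul_onel.
  rewrite (Opsum_ext (fun n => Omul (Opow x n) (cpr a t k L n)) (fun n => Oadd (Omul (Opow x n) (Atr a L n))
     (if (k <=? n)%nat then Omul (Opow x ((n - k) + k)) (Omul t (Atr a L (n - k))) else Ozero))).
  2:{ intros n _. unfold cpr. rewrite Omul_addr. f_equal. destruct (k <=? n)%nat eqn:E.
      apply Nat.leb_le in E. replace (n - k + k)%nat with n by lia. auto. apply Omul_zeror. }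
  rewrite Opsum_add. f_equal.
  - rewrite Opsum_zero_tail. apply Opsum_ext. intros n Hn. unfold Atr.
    replace (n <=? L)%nat with true by (symmetry; apply Nat.leb_le; lia). auto.
    intros n Hn. unfold Atr. replace (n <=? L)%nat with false by (symmetry; apply Nat.leb_gt; lia).
    apply Omul_zeror.
  - rewrite (Opsum_shift (fun m => Omul (Opow x (m + k)) (Omul t (Atr a L m)))).
    rewrite Opsum_mul_l. apply Opsum_ext. intros n Hn. unfold Atr.
    replace (n <=? L)%nat with true by (symmetry; apply Nat.leb_le; lia).
    unfold x, t. symmetry. apply slice_shift; auto.
Qed.

Lemma rsum_two f M k : (0 < k <= M)%nat -> (forall n, (n <= M)%nat -> 0 <= f n) ->
  f O + f k <= rsum f (S M).
Proof.
  intros Hk Hf.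
  assert (forall d, (k + d <= M)%nat -> f O + f k <= rsum f (S (k + d))).
  { induction d; intros.
    - rewrite Nat.add_0_r. destruct k as [|k']; [lia|].
      cbn [rsum]. assert (forall j, (j <= k')%nat -> f O <= rsum f (S j)).
      { induction j; intros. simpl. lra. cbn [rsum] in *. pose proof (IHj ltac:(lia)). pose proof (Hf (S j) ltac:(lia)). lra. }
      pose proof (H0 k' ltac:(lia)). cbn [rsum] in H1. lra.
    - rewrite Nat.add_succ_r. cbn [rsum]. cbn [rsum] in IHd. pose proof (IHd ltac:(lia)).
      pose proof (Hf (S (k + d)) ltac:(lia)). lra. }
  replace M with (k + (M - k))%nat by lia. apply H. lia.
Qed.

Lemma pow_le1 x n : 0 <= x <= 1 -> x ^ n <= 1.
Proof. intros. induction n; simpl. lra. pose proof (pow_le x n (proj1 H)). nra. Qed.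

Lemma Onorm_oscal_one r : 0 <= r -> Onorm (Oscal r Oone) = r.
Proof. intros. rewrite Onorm_scal, Onorm_one, Rabs_right; lra. Qed.

Lemma coef_decay f a : slice_regular_ball f a -> forall r, 0 < r < 1 ->
  exists n0, forall n, (n0 <= n)%nat -> Onorm (a n) * r^n <= 1.
Proof.
  intros Hf r Hr. set (x := Oscal r Oone).
  assert (Hx : Onorm x = r) by (apply Onorm_oscal_one; lra).
  destruct (Oseries_ev _ _ (Hf x ltac:(lra)) (1/2) ltac:(lra)) as [N HN].
  exists (S N). intros n Hn. destruct n as [|p]; [lia|].
  set (u := fun k => Omul (Opow x k) (a k)).
  assert (E : u (S p) = Osub (Opsum u (S p)) (Opsum u p)).
  { cbn [Opsum]. rewrite Osub_add. auto. }
  pose proof (Onorm_sub3 (Opsum u (S p)) (Opsum u p) (f x)).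
  pose proof (HN (S p) ltac:(lia)). pose proof (HN p ltac:(lia)).
  rewrite <- E in H. unfold u in H. rewrite Onorm_mul, Opow_norm, Hx in H. lra.
Qed.

Lemma tail_to_f f a x L q : slice_regular_ball f a -> Onorm x < 1 -> 0 <= q < 1 ->
  (forall n, (L < n)%nat -> Onorm (Omul (Opow x n) (a n)) <= q^n) ->
  Onorm (Osub (f x) (Opsum (fun n => Omul (Opow x n) (a n)) L)) <= q^(S L)/(1-q).
Proof.
  intros Hf Hx Hq Hb. apply le_epsilon. intros eps He.
  destruct (Oseries_ev _ _ (Hf x Hx) eps He) as [N HN].
  set (u := fun n => Omul (Opow x n) (a n)).
  pose proof (Opsum_tail_bound u L q Hq Hb N).
  pose proof (HN (L + N)%nat ltac:(lia)). fold u in H0.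
  pose proof (Onorm_sub3 (f x) (Opsum u L) (Opsum u (L + N))).
  rewrite (Osub_sym_norm (f x) (Opsum u (L + N))), (Osub_sym_norm (Opsum u L) (Opsum u (L + N))) in H1.
  assert (0 <= q ^ S (L + N) / (1 - q)). { apply Rdiv_le_0_compat. apply pow_le; lra. lra. }
  assert ((q ^ S L - q ^ S (L + N)) / (1 - q) = q ^ S L / (1-q) - q ^ S (L + N) / (1 - q)) by (field; lra).
  lra.
Qed.

Lemma Onorm_rootpt I r N j : uim I -> 0 <= r -> Onorm (rootpt I r N j) = r.
Proof. intros. unfold rootpt. rewrite Onorm_sq, xpt_nsq by auto. apply sqrt_pow2; auto. Qed.

Lemma W4 f a k I t1 t2 r q L : slice_regular_ball f a ->
  (forall x, Onorm x < 1 -> Onorm (f x) <= 1) -> (1 <= k <= L)%nat -> uim I -> 0 < r < 1 -> 0 <= q < 1 ->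
  (forall x n, Onorm x = r -> (L < n)%nat -> Onorm (Omul (Opow x n) (a n)) <= q^n) ->
  let t := phi I t1 t2 in let K := 1 + Onorm t in let T := q^(S L)/(1-q) in
  Onsq (a O) + r^(2*k) * Onsq (Oadd (a k) (Omul t (a O))) <= 1 + r^(2*k) * Onsq t + (2*K*K*T + K*K*T*T).
Proof.
  intros Hf Hb Hk HI Hr Hq Hd t K T.
  set (N := (L + k + 1)%nat).
  assert (HN : 0 < INR N) by (apply lt_0_INR; unfold N; lia).
  assert (HT : 0 <= T). { unfold T. apply Rdiv_le_0_compat. apply pow_le; lra. lra. }
  assert (HK : 1 <= K) by (unfold K; pose proof (Onorm_ge0 t); lra).
  set (W := fun j => Oadd Oone (Omul t (Opow (rootpt I r N j) k))).
  set (Q := fun j => Omul (W j) (Opsum (fun n => Omul (Opow (rootpt I r N j) n) (a n)) L)).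
  assert (Hj : forall j, Onsq (Q j) <= Onsq (W j) + (2*K*K*T + K*K*T*T)).
  { intro j. set (x := rootpt I r N j).
    assert (Hx : Onorm x = r) by (apply Onorm_rootpt; auto; lra).
    assert (HW : Onorm (W j) <= K).
    { unfold W. eapply Rle_trans. apply Onorm_tri. rewrite Onorm_one, Onorm_mul, Opow_norm.
      fold x. rewrite Hx. unfold K. pose proof (Onorm_ge0 t).
      assert (r ^ k <= 1) by (apply pow_le1; lra). nra. }
    set (P := Opsum (fun n => Omul (Opow x n) (a n)) L).
    assert (HP : Onorm (Osub P (f x)) <= T).
    { rewrite Osub_sym_norm. apply tail_to_f; auto; try lra. }
    assert (EQ : Q j = Oadd (Omul (W j) (f x)) (Omul (W j) (Osub P (f x)))).
    { unfold Q. fold x. fold P. rewrite <- Omul_addr, Oadd_sub. auto. }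
    assert (HQ : Onorm (Q j) <= Onorm (W j) + K * T).
    { rewrite EQ. eapply Rle_trans. apply Onorm_tri. rewrite !Onorm_mul.
      pose proof (Hb x ltac:(lra)). pose proof (Onorm_ge0 (W j)). pose proof (Onorm_ge0 (f x)).
      pose proof (Onorm_ge0 (Osub P (f x))). apply Rplus_le_compat.
      rewrite <- (Rmult_1_r (Onorm (W j))) at 2. apply Rmult_le_compat_l; lra.
      apply Rmult_le_compat; lra. }
    rewrite <- !Onorm_sqr. pose proof (Onorm_ge0 (Q j)). pose proof (Onorm_ge0 (W j)).
    apply Rle_trans with ((Onorm (W j) + K * T)^2). apply pow_incr; lra.
    assert (Onorm (W j) * (K * T) <= K * (K * T)) by (apply Rmult_le_compat_r; nra).
    nra. }
  assert (S1 : rsum (fun j => Onsq (Q j)) N <= INR N * (1 + r^(2*k) * Onsq t) + INR N * (2*K*K*T + K*K*T*T)).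
  { unfold t. rewrite <- (W1 I t1 t2 r N k) by (auto; unfold N; lia). rewrite <- rsum_const, <- rsum_plus.
    apply rsum_le. intros. apply Hj. }
  assert (S2 : rsum (fun j => Onsq (Q j)) N = INR N * rsum (fun n => r^(2*n) * Onsq (cpr a t k L n)) (S (L + k))).
  { rewrite <- (ortho I r N (L + k) (cpr a t k L)) by (auto; unfold N; lia). apply rsum_ext. intros j _. unfold Q, W, rootpt, t.
    rewrite W2 by auto. auto. }
  assert (S3 : Onsq (a O) + r^(2*k) * Onsq (Oadd (a k) (Omul t (a O))) <=
               rsum (fun n => r^(2*n) * Onsq (cpr a t k L n)) (S (L + k))).
  { replace (Onsq (a O)) with (r^(2*0) * Onsq (cpr a t k L 0)).
    replace (Onsq (Oadd (a k) (Omul t (a O)))) with (Onsq (cpr a t k L k)).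
    apply (rsum_two (fun n => r ^ (2 * n) * Onsq (cpr a t k L n))). lia.
    intros. apply Rmult_le_pos. apply pow_le; lra. apply Onsq_ge0.
    unfold cpr, Atr. rewrite Nat.leb_refl, Nat.sub_diag.
    replace (k <=? L)%nat with true by (symmetry; apply Nat.leb_le; lia).
    replace (0 <=? L)%nat with true by (symmetry; apply Nat.leb_le; lia). auto.
    unfold cpr, Atr. replace (k <=? 0)%nat with false by (symmetry; apply Nat.leb_gt; lia).
    replace (0 <=? L)%nat with true by (symmetry; apply Nat.leb_le; lia). rewrite Oadd_zeror. simpl. ring. }
  rewrite S2 in S1.
  assert (rsum (fun n => r^(2*n) * Onsq (cpr a t k L n)) (S (L + k)) <= (1 + r^(2*k) * Onsq t) + (2*K*K*T + K*K*T*T)).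
  { apply (Rmult_le_reg_l (INR N)); auto. lra. }
  lra.
Qed.

Lemma bernoulli h n : 0 <= h <= 1 -> 1 - INR n * h <= (1 - h) ^ n.
Proof.
  intros Hh. induction n. simpl; lra.
  rewrite S_INR. simpl. assert (0 <= INR n) by apply pos_INR.
  assert (0 <= (1-h)^n) by (apply pow_le; lra). nra.
Qed.

Lemma lim_E (A B K q : R) L0 : 0 <= q < 1 -> 1 <= K ->
  (forall L, (L0 <= L)%nat -> A <= B + (2*K*K*(q^(S L)/(1-q)) + K*K*(q^(S L)/(1-q))*(q^(S L)/(1-q)))) ->
  A <= B.
Proof.
  intros Hq HK H. apply le_epsilon. intros eps He.
  set (m := Rmin 1 (eps / (3*K*K))).
  assert (Hm : 0 < m). { unfold m. apply Rmin_pos. lra. apply Rdiv_lt_0_compat; nra. }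
  destruct (pow_lt_1_zero q ltac:(rewrite Rabs_right; lra) ((1-q)*m) ltac:(nra)) as [N1 HN1].
  set (L := Nat.max L0 N1). specialize (H L ltac:(unfold L; lia)).
  specialize (HN1 (S L) ltac:(unfold L; lia)). rewrite Rabs_right in HN1 by (apply Rle_ge, pow_le; lra).
  set (T := q ^ S L / (1 - q)) in *.
  assert (HT : 0 <= T < m). { unfold T. split. apply Rdiv_le_0_compat. apply pow_le; lra. lra.
    apply (Rmult_lt_reg_r (1-q)). lra. field_simplify; lra. }
  assert (m <= 1) by apply Rmin_l. assert (m <= eps / (3*K*K)) by apply Rmin_r.
  assert (3*K*K*m <= eps). { apply Rle_trans with (3*K*K*(eps/(3*K*K))); [apply Rmult_le_compat_l; nra| right; field; nra]. }
  assert (HKK : 0 <= K*K) by nra.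
  assert (HKT : 0 <= K*K*T) by (apply Rmult_le_pos; lra).
  assert (K*K*T*T <= K*K*T). { rewrite <- (Rmult_1_r (K*K*T)) at 2. apply Rmult_le_compat_l; lra. }
  assert (K*K*T <= K*K*m) by (apply Rmult_le_compat_l; lra).
  lra.
Qed.

Lemma lim_rho (A B C : R) k :
  (forall r, 0 < r < 1 -> A + r^(2*k) * B <= 1 + r^(2*k) * C) -> A + B <= 1 + C.
Proof.
  intros H. destruct (Rle_dec (B - C) 0).
  - specialize (H (1/2) ltac:(lra)). assert (0 <= (1/2)^(2*k) <= 1) by (split; [apply pow_le|apply pow_le1]; lra). nra.
  - apply Rnot_le_lt in n. apply Rnot_lt_le. intro Hc.
    set (d := B - C). set (del := A + B - 1 - C).
    set (h := Rmin (1/2) (del / (2 * d * (INR (2*k) + 1)))).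
    assert (0 <= INR (2*k)) by apply pos_INR.
    assert (Hh : 0 < h). { unfold h. apply Rmin_pos. lra. apply Rdiv_lt_0_compat. unfold del; lra. unfold d; nra. }
    assert (h <= 1/2) by apply Rmin_l. assert (h <= del / (2 * d * (INR (2*k) + 1))) by apply Rmin_r.
    specialize (H (1 - h) ltac:(lra)). pose proof (bernoulli h (2*k) ltac:(lra)).
    assert (INR (2*k) * h * d < del).
    { apply Rle_lt_trans with (INR (2*k) * (del / (2 * d * (INR (2*k) + 1))) * d).
      apply Rmult_le_compat_r. unfold d; lra. apply Rmult_le_compat_l; lra.
      replace (INR (2*k) * (del / (2 * d * (INR (2*k) + 1))) * d) with (del * (INR (2*k) / (2 * (INR (2*k) + 1)))) by (field; unfold d; lra).
      assert (INR (2*k) / (2 * (INR (2*k) + 1)) < 1). { apply (Rmult_lt_reg_r (2 * (INR (2*k) + 1))). lra. field_simplify; lra. }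
      assert (0 < del) by (unfold del; lra). nra. }
    assert ((1-h)^(2*k) * d >= (1 - INR (2*k) * h) * d) by (apply Rle_ge, Rmult_le_compat_r; unfold d; lra).
    unfold d, del in *. nra.
Qed.

Lemma wiener_slice f a k I t1 t2 : slice_regular_ball f a ->
  (forall x, Onorm x < 1 -> Onorm (f x) <= 1) -> (1 <= k)%nat -> uim I ->
  Onsq (a O) + Onsq (Oadd (a k) (Omul (phi I t1 t2) (a O))) <= 1 + Onsq (phi I t1 t2).
Proof.
  intros Hf Hb Hk HI. apply (lim_rho _ _ _ k). intros r Hr.
  set (r' := (1 + r)/2). destruct (coef_decay f a Hf r' ltac:(unfold r'; lra)) as [n0 Hn0].
  set (q := r / r').
  assert (Hq : 0 <= q < 1). { unfold q, r'. split. apply Rdiv_le_0_compat; lra.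
    apply (Rmult_lt_reg_r ((1+r)/2)). lra. field_simplify; lra. }
  apply (lim_E _ _ (1 + Onorm (phi I t1 t2)) q (Nat.max n0 k)). auto.
  pose proof (Onorm_ge0 (phi I t1 t2)); lra.
  intros L HL. apply (W4 f a k I t1 t2 r q L); auto. lia.
  intros x n Hx Hn. rewrite Onorm_mul, Opow_norm, Hx.
  replace r with (q * r') at 1 by (unfold q, r'; field; lra). rewrite Rpow_mult_distr.
  pose proof (Hn0 n ltac:(lia)). pose proof (pow_le q n (proj1 Hq)). pose proof (Onorm_ge0 (a n)). nra.
Qed.

Definition Oim (x : Oct) : Oct := Osub x (Oscal (Ore x) Oone).
Definition Oe1 : Oct := (((0,1),(0,0)),((0,0),(0,0))).

Lemma Ore_scal s x : Ore (Oscal s x) = s * Ore x.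
Proof. odes x; reflexivity. Qed.
Lemma Ore_Oim x : Ore (Oim x) = 0.
Proof. odes x; unfold Oim, Ore; ocbv; ring. Qed.
Lemma phi_decomp x : x = phi (Oim x) (Ore x) 1.
Proof. odes x; unfold phi, Oim, Ore; ocbv; osplit; ring. Qed.
Lemma Oim_zero x : Onsq (Oim x) = 0 -> x = Oscal (Ore x) Oone.
Proof. intro H. apply Onsq_zero_inv in H. unfold Oim in H. odes x. unfold Ore in *. ocbv.
  injection H; intros. osplit; lra. Qed.
Lemma uim_e1 : uim Oe1.
Proof. split; unfold Ore, Onsq, Oe1; ocbv; ring. Qed.
Lemma phi_scal_I I a b s : phi (Oscal s I) a b = phi I a (b * s).
Proof. odes I; unfold phi; ocbv; osplit; ring. Qed.

Lemma slice_rep t : exists I t1 t2, uim I /\ t = phi I t1 t2.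
Proof.
  destruct (Req_dec (Onsq (Oim t)) 0) as [H|H].
  - exists Oe1, (Ore t), 0. split. apply uim_e1. rewrite (Oim_zero t H) at 1.
    unfold phi. odes t; ocbv; osplit; ring.
  - set (s := Onorm (Oim t)). assert (Hs : s^2 = Onsq (Oim t)) by apply Onorm_sqr.
    assert (Hs0 : 0 < s). { pose proof (Onorm_ge0 (Oim t)). fold s in H0. destruct H0; auto.
      exfalso. apply H. rewrite <- Hs, <- H0. ring. }
    exists (Oscal (/s) (Oim t)), (Ore t), s. split.
    + split. rewrite Ore_scal, Ore_Oim; ring. rewrite Onsq_scal, <- Hs. field. lra.
    + rewrite phi_scal_I. rewrite (phi_decomp t) at 1. f_equal. field. lra.
Qed.

Lemma wiener_t f a k t : slice_regular_ball f a ->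
  (forall x, Onorm x < 1 -> Onorm (f x) <= 1) -> (1 <= k)%nat ->
  Onsq (a O) + Onsq (Oadd (a k) (Omul t (a O))) <= 1 + Onsq t.
Proof.
  intros. destruct (slice_rep t) as [I [t1 [t2 [HI E]]]]. subst t. apply (wiener_slice f); auto.
Qed.

Lemma wiener f a k : slice_regular_ball f a ->
  (forall x, Onorm x < 1 -> Onorm (f x) <= 1) -> (1 <= k)%nat ->
  Onorm (a k) <= 1 - Onorm (a O) ^ 2.
Proof.
  intros Hf Hb Hk.
  set (al := Onorm (a O)). set (b := Onorm (a k)).
  assert (Hal : 0 <= al) by apply Onorm_ge0. assert (Hb0 : 0 <= b) by apply Onorm_ge0.
  pose proof (wiener_t f a k Ozero Hf Hb Hk) as H0.
  rewrite Omul_zerol, Oadd_zeror, Onsq_zero, <- !Onorm_sqr in H0. fold al b in H0.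
  destruct (Req_dec al 1) as [E|E].
  - rewrite E in H0 |- *. nra.
  - assert (al < 1) by nra.
    set (lam := / (1 - al^2)).
    assert (Hl : lam * (1 - al^2) = 1) by (unfold lam; field; nra).
    assert (Hlp : 0 < lam) by (unfold lam; apply Rinv_0_lt_compat; nra).
    pose proof (wiener_t f a k (Oscal lam (Omul (a k) (Oconj (a O)))) Hf Hb Hk) as H1.
    rewrite Omul_scall, Oconj_trick in H1.
    rewrite Onsq_scal, Onsq_mul, Onsq_conj in H1.
    replace (Oadd (a k) (Oscal lam (Oscal (Onsq (a O)) (a k)))) with (Oscal (1 + lam * Onsq (a O)) (a k)) in H1
      by (odes (a k); ocbv; osplit; ring).
    rewrite Onsq_scal, <- !Onorm_sqr in H1. fold al b in H1.
    assert (1 + lam * al^2 = lam) by nra. rewrite H2 in H1.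
    assert (lam^2 * b^2 * (1 - al^2) <= 1 - al^2) by nra.
    assert (lam^2 * b^2 <= 1). { apply (Rmult_le_reg_r (1 - al^2)). nra. lra. }
    assert (lam * b <= 1) by nra.
    assert (b = lam * b * (1 - al^2)) by (rewrite Rmult_assoc, (Rmult_comm b), <- Rmult_assoc, Hl; ring).
    nra.
Qed.

Lemma ln_le_xm1 t : 0 < t -> ln t <= t - 1.
Proof. intros. pose proof (exp_ineq1_le (t - 1)). rewrite <- (ln_exp (t-1)). apply ln_le; auto; lra. Qed.

Lemma rpow_bern al m : 0 <= al <= 1 -> 0 < m <= 1 -> rpow al m <= 1 - m * (1 - al).
Proof.
  intros Ha Hm. unfold rpow. destruct (Req_EM_T al 0). nra.
  assert (0 < al) by lra. set (M := 1 - m + m * al). assert (HM : 0 < M) by (unfold M; nra).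
  unfold Rpower. replace (1 - m * (1 - al)) with M by (unfold M; ring).
  rewrite <- (exp_ln M HM). apply exp_le_3 || idtac.
  assert (m * ln al <= ln M).
  { pose proof (ln_le_xm1 (al / M) ltac:(apply Rdiv_lt_0_compat; lra)).
    pose proof (ln_le_xm1 (1 / M) ltac:(apply Rdiv_lt_0_compat; lra)).
    rewrite ln_div in H0, H1 by lra. rewrite ln_1 in H1.
    assert (m * (ln al - ln M) + (1 - m) * (0 - ln M) <= m * (al / M - 1) + (1 - m) * (1 / M - 1)).
    { apply Rplus_le_compat; apply Rmult_le_compat_l; lra. }
    assert (m * (al / M - 1) + (1 - m) * (1 / M - 1) = 0).
    { replace (m * (al / M - 1) + (1 - m) * (1 / M - 1)) with ((m*al + 1 - m)/M - 1) by (field; lra).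
      replace (m*al + 1 - m) with M by (unfold M; ring). field; lra. }
    nra. }
  destruct (Req_dec (m * ln al) (ln M)). rewrite H1; lra. left. apply exp_increasing. lra.
Qed.

Lemma series_bound (c : nat -> R) K q : 0 <= q < 1 -> 0 <= K ->
  (forall n, 0 <= c n <= K * q^(S n)) ->
  exists S, Lim_seq (sum_n c) = Finite S /\ 0 <= S <= K * q / (1 - q).
Proof.
  intros Hq HK Hc.
  assert (Hg : is_series (fun n => K * q^(S n)) (K * q / (1 - q))).
  { replace (K * q / (1 - q)) with ((/ (1 - q)) * (K*q)) by (field; lra).
    apply (is_series_ext (fun n => (q ^ n) * (K*q))). intros; simpl; ring.
    apply is_series_scal_r. apply is_series_geom. rewrite Rabs_right; lra. }
  assert (Hex : ex_series c).
  { apply (ex_series_le c (fun n => K * q^(S n))). intros. unfold norm; simpl. rewrite Rabs_right. apply Hc. apply Rle_ge, Hc.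
    exists (K*q/(1-q)); auto. }
  exists (Series c). split.
  - apply is_lim_seq_unique. apply (Series_correct c Hex).
  - split.
    + replace 0 with (0 * Series c) by ring. rewrite <- Series_scal_l. apply Series_le.
      intros; split; [lra|]. rewrite Rmult_0_l; apply Hc. exists (Series c). apply Series_correct; auto.
    + rewrite <- (is_series_unique _ _ Hg). apply Series_le. auto. exists (K*q/(1-q)); auto.
Qed.

Lemma final_ineq m al r : 0 < m <= 1 -> 0 <= al <= 1 -> 0 <= r -> r <= m / (2 + m) ->
  rpow al m + (1 - al^2) * r / (1 - r) +
    (1 / (1 + al) + r / (1 - r)) * ((1 - al^2)^2 * r^2 / (1 - r^2)) <= 1.
Proof.
  intros Hm Ha Hr HR.
  assert (HR' : r * (2 + m) <= m). { apply (Rmult_le_compat_r (2+m)) in HR; [|lra].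
    replace (m / (2 + m) * (2 + m)) with m in HR by (field; lra). lra. }
  assert (Hr1 : r <= 1/3).
  { assert (E1 : (r - 1/3) * (2 + m) <= 0) by nra.
    destruct (Rle_dec r (1/3)); auto. assert (0 < (r - 1/3) * (2 + m)) by (apply Rmult_lt_0_compat; lra). lra. }
  assert (A1 : r / (1 - r) <= m / 2). { apply (Rmult_le_reg_r (1 - r)). lra. field_simplify; nra. }
  assert (A2 : r^2 / (1 - r^2) <= m^2 / (4 * (1 + m))).
  { assert (0 < 1 - r^2) by nra.
    assert (Q1 : (r * (2+m))^2 <= m^2) by (apply pow_incr; nra).
    apply (Rmult_le_reg_r ((1 - r^2) * (4 * (1+m)))). nra.
    replace (r ^ 2 / (1 - r ^ 2) * ((1 - r ^ 2) * (4 * (1 + m)))) with (4 * (1+m) * r^2) by (field; lra).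
    replace (m ^ 2 / (4 * (1 + m)) * ((1 - r ^ 2) * (4 * (1 + m)))) with (m^2 * (1 - r^2)) by (field; lra).
    nra. }
  pose proof (rpow_bern al m Ha Hm). set (e := 1 - al) in *.
  assert (Hb : 0 <= 1 - al^2) by nra.
  assert (B1 : (1 - al^2) * r / (1 - r) <= (1 - al^2) * (m/2)).
  { unfold Rdiv. rewrite Rmult_assoc. apply Rmult_le_compat_l; auto. }
  assert (Hc : 0 <= 1 / (1 + al) + r / (1 - r)).
  { assert (0 <= 1/(1+al)) by (apply Rdiv_le_0_compat; lra). assert (0 <= r/(1-r)) by (apply Rdiv_le_0_compat; lra). lra. }
  assert (B2 : (1 / (1 + al) + r / (1 - r)) * ((1 - al^2)^2 * r^2 / (1 - r^2)) <=
               (1 / (1 + al) + m / 2) * ((1 - al^2)^2 * (m^2 / (4 * (1 + m))))).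
  { apply Rmult_le_compat; auto. unfold Rdiv. rewrite Rmult_assoc. apply Rmult_le_pos. nra.
    apply Rmult_le_pos. nra. apply Rlt_le, Rinv_0_lt_compat; nra. lra.
    unfold Rdiv. rewrite Rmult_assoc. apply Rmult_le_compat_l. nra. apply A2. }
  assert (E2 : (1 / (1 + al) + m / 2) * ((1 - al^2)^2 * (m^2 / (4 * (1 + m)))) =
     m^2 / (4 * (1+m)) * (e^2 * (2 - e) + m / 2 * e^2 * (2 - e)^2)).
  { unfold e. field. lra. }
  assert (X : e^2 * (2 - e) + m / 2 * e^2 * (2 - e)^2 <= e^2 * (2 + 2*m)).
  { assert (0 <= e <= 1) by (unfold e; lra). assert ((2-e) <= 2) by lra. assert ((2-e)^2 <= 4) by nra.
    assert (e^2 * (2-e) <= e^2 * 2) by (apply Rmult_le_compat_l; nra).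
    assert (m/2 * e^2 * (2-e)^2 <= m/2 * e^2 * 4) by (apply Rmult_le_compat_l; nra). nra. }
  assert (Y : m^2 / (4 * (1+m)) * (e^2 * (2 - e) + m / 2 * e^2 * (2 - e)^2) <= m^2/(4*(1+m)) * (e^2 * (2 + 2*m))).
  { apply Rmult_le_compat_l; auto. apply Rdiv_le_0_compat; nra. }
  assert (Z : m^2/(4*(1+m)) * (e^2 * (2 + 2*m)) = m^2 * e^2 / 2) by (field; lra).
  assert (W : (1 - al^2) * (m/2) = m * e - m * e^2 / 2) by (unfold e; field).
  assert (m^2 * e^2 / 2 <= m * e^2 / 2) by (assert (0 <= e^2) by nra; nra).
  lra.
Qed.

Lemma part1 (m : R) (hm0 : 0 < m) (hm1 : m <= 1) :
  forall (f : Oct -> Oct) (a : nat -> Oct),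
     slice_regular_ball f a ->
     (forall x : Oct, Onorm x < 1 -> Onorm (f x) <= 1) ->
     forall x : Oct, Onorm x < 1 -> Onorm x <= m / (2 + m) ->
       Rbar_le (Cf m a x) (Finite 1).
Proof.
  intros f a Hf Hb x Hx HR.
  set (r := Onorm x). set (al := Onorm (a O)). fold r in Hx, HR.
  assert (Hr : 0 <= r) by apply Onorm_ge0. assert (Hal : 0 <= al) by apply Onorm_ge0.
  assert (Hw : forall n, Onorm (a (S n)) <= 1 - al^2) by (intros; apply (wiener f); auto; lia).
  assert (Hal1 : al <= 1). { pose proof (Hw O). pose proof (Onorm_ge0 (a 1%nat)). nra. }
  set (c := fun n => Onorm (Omul (Opow x (S n)) (a (S n)))).
  assert (Hc : forall n, c n = r^(S n) * Onorm (a (S n))).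
  { intros; unfold c; rewrite Onorm_mul, Opow_norm; auto. }
  destruct (series_bound c (1 - al^2) r ltac:(split; lra) ltac:(nra)) as [S1 [E1 B1]].
  { intros n. rewrite Hc. pose proof (Hw n). pose proof (Onorm_ge0 (a (S n))).
    pose proof (pow_le r (S n) Hr). split. nra. rewrite Rmult_comm. apply Rmult_le_compat_r; auto. }
  destruct (series_bound (fun n => c n ^ 2) ((1 - al^2)^2) (r^2) ltac:(split; nra) ltac:(apply pow2_ge_0)) as [S2 [E2 B2]].
  { intros n. rewrite Hc. pose proof (Hw n). pose proof (Onorm_ge0 (a (S n))).
    pose proof (pow_le r (S n) Hr). split. nra.
    rewrite <- pow_mult, Nat.mul_comm, pow_mult, Rpow_mult_distr, Rmult_comm.
    apply Rmult_le_compat_r. apply pow_le; nra. apply pow_incr; nra. }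
  unfold Cf, nnseries. fold al. fold r.
  change (Lim_seq (fun n => sum_n (fun k => Onorm (Omul (Opow x (S k)) (a (S k)))) n)) with (Lim_seq (sum_n c)).
  change (Lim_seq (fun n => sum_n (fun k => Onorm (Omul (Opow x (S k)) (a (S k))) ^ 2) n)) with (Lim_seq (sum_n (fun n => c n ^ 2))).
  rewrite E1, E2. simpl.
  pose proof (final_ineq m al r ltac:(lra) ltac:(lra) Hr HR).
  assert (Hco : 0 <= 1 / (1 + al) + r / (1 - r)).
  { assert (0 <= 1/(1+al)) by (apply Rdiv_le_0_compat; lra). assert (0 <= r/(1-r)) by (apply Rdiv_le_0_compat; lra). lra. }
  assert ((1 / (1 + al) + r / (1 - r)) * S2 <= (1 / (1 + al) + r / (1 - r)) * ((1 - al ^ 2) ^ 2 * r ^ 2 / (1 - r ^ 2))).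
  { apply Rmult_le_compat_l; lra. }
  lra.
Qed.

Definition E (I : Oct) (z : C) : Oct := phi I (fst z) (snd z).
Fixpoint cpow (z : C) (n : nat) : C := match n with O => RtoC 1 | S k => Cmult (cpow z k) z end.

Lemma E_mul I z w : uim I -> Omul (E I z) (E I w) = E I (Cmult z w).
Proof. intros. destruct z, w. unfold E. rewrite phi_mul by auto. simpl. f_equal; ring. Qed.
Lemma E_sub I z w : Osub (E I z) (E I w) = E I (Cminus z w).
Proof. destruct z, w. unfold E; simpl. odes I; ocbv; osplit; ring. Qed.
Lemma E_add I z w : Oadd (E I z) (E I w) = E I (Cplus z w).
Proof. destruct z, w. unfold E; simpl. odes I; ocbv; osplit; ring. Qed.
Lemma E_norm I z : uim I -> Onorm (E I z) = Cmod z.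
Proof. intros. unfold E, Cmod. rewrite Onorm_sq, phi_nsq; auto. Qed.
Lemma E_one I : E I (RtoC 1) = Oone.
Proof. unfold E, RtoC; simpl. apply phi_one. Qed.
Lemma Opow_E I z n : uim I -> Opow (E I z) n = E I (cpow z n).
Proof. intros. induction n; simpl. symmetry; apply E_one. rewrite IHn, E_mul; auto. Qed.
Lemma E_scal I z c : Omul (E I z) (Oscal c Oone) = E I (Cmult z (RtoC c)).
Proof. rewrite Omul_scalr, Omul_oner. destruct z. unfold E, RtoC; simpl. odes I; ocbv; osplit; ring. Qed.
Lemma cpow_Cmod z n : Cmod (cpow z n) = Cmod z ^ n.
Proof. induction n; simpl. apply Cmod_1. rewrite Cmod_mult, IHn. ring. Qed.

Definition sI (x : Oct) : Oct :=
  if Req_EM_T (Onorm (Oim x)) 0 then Oe1 else Oscal (/ Onorm (Oim x)) (Oim x).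
Definition sz (x : Oct) : C := (Ore x, Onorm (Oim x)).

Lemma sI_uim x : uim (sI x).
Proof.
  unfold sI. destruct (Req_EM_T (Onorm (Oim x)) 0). apply uim_e1.
  pose proof (Onorm_ge0 (Oim x)). split. rewrite Ore_scal, Ore_Oim; ring.
  rewrite Onsq_scal, <- Onorm_sqr. field. auto.
Qed.
Lemma sI_decomp x : x = E (sI x) (sz x).
Proof.
  unfold E, sz, sI. cbn [fst snd]. destruct (Req_EM_T (Onorm (Oim x)) 0).
  - assert (Onsq (Oim x) = 0) by (rewrite <- Onorm_sqr, e; ring).
    rewrite (Oim_zero x H) at 1. rewrite e. unfold phi. odes x; ocbv; osplit; ring.
  - rewrite phi_scal_I. rewrite (phi_decomp x) at 1. f_equal. field. auto.
Qed.
Lemma sz_norm x : Cmod (sz x) = Onorm x.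
Proof. rewrite (sI_decomp x) at 2. rewrite E_norm. auto. apply sI_uim. Qed.

Definition ac (al : R) (n : nat) : R := match n with O => al | S k => - (1 - al^2) * al^k end.
Definition acoef al n : Oct := Oscal (ac al n) Oone.
Definition Fm (al : R) (z : C) : C := Cdiv (Cminus (RtoC al) z) (Cminus (RtoC 1) (Cmult (RtoC al) z)).
Definition fm al (x : Oct) : Oct := E (sI x) (Fm al (sz x)).
Definition cterm al z n := Cmult (cpow z n) (RtoC (ac al n)).
Fixpoint csum al z L := match L with O => cterm al z O | S k => Cplus (csum al z k) (cterm al z (S k)) end.

Lemma Opsum_E I z al L : uim I ->
  Opsum (fun k => Omul (Opow (E I z) k) (acoef al k)) L = E I (csum al z L).
Proof.
  intros HI. induction L; cbn [Opsum csum].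
  - unfold acoef, cterm. rewrite Opow_E, E_scal; auto.
  - rewrite IHL. unfold acoef, cterm. rewrite Opow_E, E_scal, E_add; auto.
Qed.

Lemma csum_id al z L : Cminus (RtoC 1) (Cmult (RtoC al) z) <> RtoC 0 ->
  Cmult (Cminus (RtoC 1) (Cmult (RtoC al) z)) (Cminus (csum al z L) (Fm al z)) =
  Cmult (RtoC ((1 - al^2) * al^L)) (cpow z (S L)).
Proof.
  intros Hnz. induction L.
  - cbn [csum cpow]. unfold cterm, Fm, ac. cbn [cpow].
    replace (RtoC ((1 - al^2) * al^0)) with (Cminus (RtoC 1) (Cmult (RtoC al) (RtoC al))).
    field. auto. rewrite <- RtoC_mult, <- RtoC_minus. f_equal. simpl; ring.
  - cbn [csum]. unfold cterm.
    replace (Cmult (Cminus (RtoC 1) (Cmult (RtoC al) z)) (Cminus (Cplus (csum al z L) (Cmult (cpow z (S L)) (RtoC (ac al (S L))))) (Fm al z)))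
      with (Cplus (Cmult (Cminus (RtoC 1) (Cmult (RtoC al) z)) (Cminus (csum al z L) (Fm al z)))
                  (Cmult (Cminus (RtoC 1) (Cmult (RtoC al) z)) (Cmult (cpow z (S L)) (RtoC (ac al (S L)))))) by ring.
    rewrite IHL. cbn [cpow ac].
    replace (RtoC ((1 - al^2) * al^(S L))) with (Cmult (Cminus (RtoC 1) (Cmult (RtoC al) (RtoC al))) (Cmult (RtoC al) (RtoC (al^L)))).
    replace (RtoC (- (1 - al^2) * al^L)) with (Copp (Cmult (Cminus (RtoC 1) (Cmult (RtoC al) (RtoC al))) (RtoC (al^L)))).
    replace (RtoC ((1 - al^2) * al^L)) with (Cmult (Cminus (RtoC 1) (Cmult (RtoC al) (RtoC al))) (RtoC (al^L))).
    ring.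
    + cbv [RtoC Cmult Copp Cminus Cplus fst snd]; simpl; f_equal; ring.
    + cbv [RtoC Cmult Copp Cminus Cplus fst snd]; simpl; f_equal; ring.
    + cbv [RtoC Cmult Copp Cminus Cplus fst snd]; simpl; f_equal; ring.
Qed.

Lemma denom_bound al z : 0 <= al < 1 -> Cmod z < 1 ->
  1 - al <= Cmod (Cminus (RtoC 1) (Cmult (RtoC al) z)).
Proof.
  intros Ha Hz. pose proof (Cmod_triangle (Cminus (RtoC 1) (Cmult (RtoC al) z)) (Cmult (RtoC al) z)).
  replace (Cplus (Cminus (RtoC 1) (Cmult (RtoC al) z)) (Cmult (RtoC al) z)) with (RtoC 1) in H by ring.
  rewrite Cmod_1, Cmod_mult, Cmod_R, Rabs_right in H by lra.
  pose proof (Cmod_ge_0 z). nra.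
Qed.

Lemma csum_conv al z : 0 <= al < 1 -> Cmod z < 1 ->
  is_lim_seq (fun L => Cmod (Cminus (csum al z L) (Fm al z))) 0.
Proof.
  intros Ha Hz. pose proof (denom_bound al z Ha Hz) as Hd.
  assert (Hnz : Cminus (RtoC 1) (Cmult (RtoC al) z) <> RtoC 0).
  { intro E. rewrite E, Cmod_0 in Hd. lra. }
  apply (is_lim_seq_le_le (fun _ => 0) _ (fun L => (1 + al) * al^L)).
  - intros L. split. apply Cmod_ge_0.
    pose proof (csum_id al z L Hnz) as Hid. apply (f_equal Cmod) in Hid.
    rewrite !Cmod_mult, Cmod_R, cpow_Cmod in Hid.
    rewrite Rabs_right in Hid by (apply Rle_ge, Rmult_le_pos; [nra|apply pow_le; lra]).
    set (D := Cmod (Cminus (csum al z L) (Fm al z))) in *.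
    set (Q := Cmod (Cminus (RtoC 1) (Cmult (RtoC al) z))) in *.
    assert (0 <= D) by apply Cmod_ge_0. pose proof (Cmod_ge_0 z).
    assert (Cmod z ^ S L <= 1) by (apply pow_le1; lra).
    assert (0 <= al^L) by (apply pow_le; lra).
    assert (Q * D <= (1 - al^2) * al^L). { rewrite Hid. assert (0 <= (1-al^2)*al^L) by (apply Rmult_le_pos; nra).
      rewrite <- (Rmult_1_r ((1-al^2)*al^L)) at 2. apply Rmult_le_compat_l; lra. }
    assert ((1 - al) * D <= Q * D) by (apply Rmult_le_compat_r; auto).
    assert ((1 - al) * D <= (1 - al) * ((1 + al) * al^L)) by nra.
    apply (Rmult_le_reg_l (1 - al)); lra.
  - apply is_lim_seq_const.
  - replace (Finite 0) with (Rbar_mult (1 + al) 0) by (simpl; f_equal; ring).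
    apply is_lim_seq_scal_l. apply is_lim_seq_geom. rewrite Rabs_right; lra.
Qed.

Lemma Fm_bound al z : 0 <= al < 1 -> Cmod z < 1 -> Cmod (Fm al z) <= 1.
Proof.
  intros Ha Hz. pose proof (denom_bound al z Ha Hz) as Hd.
  assert (Hnz : Cminus (RtoC 1) (Cmult (RtoC al) z) <> RtoC 0).
  { intro E. rewrite E, Cmod_0 in Hd. lra. }
  unfold Fm. rewrite Cmod_div by auto.
  apply (Rmult_le_reg_r (Cmod (Cminus (RtoC 1) (Cmult (RtoC al) z)))). lra.
  unfold Rdiv. rewrite Rmult_assoc, Rinv_l, Rmult_1_r, Rmult_1_l by lra.
  destruct z as [p s]. unfold Cmod in Hz. cbn [fst snd] in Hz.
  assert (p ^ 2 + s ^ 2 < 1).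
  { rewrite <- sqrt_1 in Hz. apply sqrt_lt_0_alt in Hz. lra. }
  unfold Cmod. apply sqrt_le_1_alt. cbn [fst snd Cminus Cplus Cmult Copp RtoC]. assert (0 <= (1-al^2)*(1-p^2-s^2)) by (apply Rmult_le_pos; nra). nra.
Qed.

Lemma fm_regular al : 0 <= al < 1 -> slice_regular_ball (fm al) (acoef al).
Proof.
  intros Ha x Hx. unfold Oseries_to.
  pose proof (sI_uim x) as HI.
  apply (is_lim_seq_ext (fun L => Cmod (Cminus (csum al (sz x) L) (Fm al (sz x))))).
  - intros L. replace (Opsum (fun k => Omul (Opow x k) (acoef al k)) L) with (E (sI x) (csum al (sz x) L)).
    2:{ rewrite <- Opsum_E by auto. rewrite <- sI_decomp. auto. }
    unfold fm.
    rewrite E_sub, E_norm; auto.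
  - apply csum_conv; auto. rewrite sz_norm; auto.
Qed.

Lemma fm_bound al : 0 <= al < 1 -> forall x, Onorm x < 1 -> Onorm (fm al x) <= 1.
Proof.
  intros Ha x Hx. unfold fm. rewrite E_norm by apply sI_uim. apply Fm_bound; auto. rewrite sz_norm; auto.
Qed.

Lemma part2_ineq m r : 0 < m <= 1 -> m / (2 + m) < r < 1 ->
  let al := 1 - Rmin (1/2) ((r * (2 + m) - m) / 8) in
  1/2 <= al < 1 /\ 1 < rpow al m + (1 - al^2) * r / (1 - al * r).
Proof.
  intros Hm Hr al. set (D := r * (2 + m) - m).
  assert (HD : 0 < D). { unfold D. destruct Hr as [Hr _].
    apply (Rmult_lt_compat_r (2+m)) in Hr; [|lra]. replace (m / (2 + m) * (2 + m)) with m in Hr by (field; lra). lra. }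
  set (h := Rmin (1/2) (D/8)).
  assert (Hh : 0 < h) by (unfold h; apply Rmin_pos; lra).
  assert (h <= 1/2) by apply Rmin_l. assert (h <= D/8) by apply Rmin_r.
  assert (Hal : al = 1 - h) by reflexivity.
  split. lra.
  assert (0 < al) by lra.
  unfold rpow. destruct (Req_EM_T al 0); [lra|]. unfold Rpower.
  pose proof (exp_ineq1_le (m * ln al)).
  assert (Hln : 1 - 1/al <= ln al).
  { pose proof (ln_le_xm1 (1/al) ltac:(apply Rdiv_lt_0_compat; lra)).
    rewrite ln_div, ln_1 in H3 by lra. lra. }
  assert (Hm1 : m * (1 - 1/al) <= m * ln al) by (apply Rmult_le_compat_l; lra).
  assert (Har : 0 < 1 - al * r) by nra.
  assert (Hkey : 0 < m * (1 - 1/al) + (1 - al^2) * r / (1 - al * r)).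
  { replace (m * (1 - 1/al) + (1 - al^2) * r / (1 - al * r)) with
       ((1 - al) * ((1 + al) * r * al - m * (1 - al * r)) / (al * (1 - al * r))) by (field; lra).
    apply Rdiv_lt_0_compat; [|nra]. apply Rmult_lt_0_compat. lra.
    rewrite Hal. unfold D in *.
    assert (h * (3 * r + m * r) <= 4 * h) by (assert (r*m <= 1) by nra; nra).
    nra. }
  lra.
Qed.

Lemma part2 (m : R) (hm0 : 0 < m) (hm1 : m <= 1) :
  forall r : R, m / (2 + m) < r -> r < 1 ->
     exists (f : Oct -> Oct) (a : nat -> Oct),
       slice_regular_ball f a /\
       (forall x : Oct, Onorm x < 1 -> Onorm (f x) <= 1) /\
       exists x : Oct, Onorm x = r /\ Rbar_lt (Finite 1) (Cf m a x).
Proof.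
  intros r Hr1 Hr2.
  destruct (part2_ineq m r ltac:(lra) ltac:(lra)) as [Hal Hineq].
  set (al := 1 - Rmin (1/2) ((r * (2 + m) - m) / 8)) in *.
  assert (Hr0 : 0 < r). { assert (0 < m / (2+m)) by (apply Rdiv_lt_0_compat; lra). lra. }
  exists (fm al), (acoef al). split. apply fm_regular; lra. split. apply fm_bound; lra.
  set (x := Oscal r Oone). exists x. split. apply Onorm_oscal_one; lra.
  set (c := fun k => Onorm (Omul (Opow x (S k)) (acoef al (S k)))).
  assert (Hc : forall n, c n = (al * r)^n * ((1 - al^2) * r)).
  { intros n. unfold c, acoef. rewrite Onorm_mul, Opow_norm, Onorm_scal, Onorm_one.
    unfold x. rewrite Onorm_oscal_one by lra. cbn [ac]. rewrite Rabs_left1.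
    rewrite Rpow_mult_distr. simpl. ring.
    assert (0 <= al^n) by (apply pow_le; lra). assert (0 <= 1 - al^2) by nra. nra. }
  assert (HS1 : Lim_seq (sum_n c) = Finite ((1 - al^2) * r / (1 - al * r))).
  { apply is_lim_seq_unique.
    assert (is_series c (/ (1 - al * r) * ((1 - al^2) * r))).
    { apply (is_series_ext (fun n => (al * r)^n * ((1 - al^2) * r))). intros; symmetry; apply Hc.
      apply is_series_scal_r. apply is_series_geom. rewrite Rabs_right; nra. }
    replace ((1 - al^2) * r / (1 - al * r)) with (/ (1 - al * r) * ((1 - al^2) * r)) by (field; nra).
    exact H. }
  destruct (series_bound (fun n => c n ^ 2) ((1 - al^2)^2) (r^2) ltac:(split; nra) ltac:(apply pow2_ge_0)) as [S2 [E2 B2]].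
  { intros n. rewrite Hc. split. apply pow2_ge_0.
    assert (0 <= al^n <= 1) by (split; [apply pow_le|apply pow_le1]; lra).
    rewrite Rpow_mult_distr.
    assert (Ep : (r^2)^(S n) = (r^(S n))^2) by (rewrite <- !pow_mult; f_equal; lia).
    rewrite Ep. replace (((al * r) ^ n) ^ 2 * ((1 - al ^ 2) * r) ^ 2) with
      ((al^n)^2 * ((1 - al^2)^2 * (r^(S n))^2)) by (rewrite Rpow_mult_distr; simpl; ring).
    assert (0 <= (1 - al^2)^2 * (r^(S n))^2) by (apply Rmult_le_pos; apply pow2_ge_0).
    assert ((al^n)^2 <= 1) by nra.
    apply Rle_trans with (1 * ((1 - al^2)^2 * (r^(S n))^2)); [apply Rmult_le_compat_r; lra | lra]. }
  unfold Cf, nnseries. fold x.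
  change (Lim_seq (fun n => sum_n (fun k => Onorm (Omul (Opow x (S k)) (acoef al (S k)))) n)) with (Lim_seq (sum_n c)).
  change (Lim_seq (fun n => sum_n (fun k => Onorm (Omul (Opow x (S k)) (acoef al (S k))) ^ 2) n)) with (Lim_seq (sum_n (fun n => c n ^ 2))).
  assert (Ea : Onorm (acoef al 0) = al) by (unfold acoef; cbn [ac]; apply Onorm_oscal_one; lra).
  rewrite HS1, E2, Ea. simpl.
  replace (al * (al * 1)) with (al ^ 2) by ring.
  assert (Hco : 0 <= 1 / (1 + al) + Onorm x / (1 - Onorm x)).
  { unfold x. rewrite Onorm_oscal_one by lra.
    assert (0 <= 1/(1+al)) by (apply Rdiv_le_0_compat; lra). assert (0 <= r/(1-r)) by (apply Rdiv_le_0_compat; lra). lra. }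
  assert (0 <= (1 / (1 + al) + Onorm x / (1 - Onorm x)) * S2) by (apply Rmult_le_pos; lra).
  lra.
Qed.

Theorem theorem1p3 (m : R) (hm0 : 0 < m) (hm1 : m <= 1) :
  (forall (f : Oct -> Oct) (a : nat -> Oct),
     slice_regular_ball f a ->
     (forall x : Oct, Onorm x < 1 -> Onorm (f x) <= 1) ->
     forall x : Oct, Onorm x < 1 -> Onorm x <= m / (2 + m) ->
       Rbar_le (Cf m a x) (Finite 1))
  /\
  (forall r : R, m / (2 + m) < r -> r < 1 ->
     exists (f : Oct -> Oct) (a : nat -> Oct),
       slice_regular_ball f a /\
       (forall x : Oct, Onorm x < 1 -> Onorm (f x) <= 1) /\
       exists x : Oct, Onorm x = r /\ Rbar_lt (Finite 1) (Cf m a x)).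
Proof.
  split. apply part1; auto. apply part2; auto.
Qed.
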